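(* For every finite set of ground terms $\Gamma$ and ground term $M$, the judgment $\Gamma\vdash M$ is derivable in the natural deduction system $\mathcal N$ if and only if the sequent $\downarrow\Gamma\vdash\downarrow M$ is derivable in the sequent system $\mathcal S$.
   Context: Fix countably infinite sets of names and variables and the constructors $\mathsf{pub}$ (unary) and $\mathsf{sign},\mathsf{blind},\langle\cdot,\cdot\rangle,\{\cdot\}_{\cdot}$ (binary). Let $E$ be an equational theory whose signature $\Sigma_E$ is disjoint from the constructors, containing at most one associative-commutative (AC) binary symbol $\oplus$, and presented by a rewrite system $R_E$ that is terminating and confluent modulo AC of $\oplus$. Terms: names, variables, $\mathsf{pub}(M)$, $\mathsf{sign}(M,N)$, $\mathsf{blind}(M,N)$, $\langle M,N\rangle$, $\{M\}_N$, $g(M_1,\dots,M_j)$ with $g\in\Sigma_E$. $\equiv$ is equality modulo AC of $\oplus$, $\approx_E$ equality modulo $E$, $\downarrow M$ the $R_E$-normal form of $M$ modulo AC, $\downarrow\Gamma=\{\downarrow N\mid N\in\Gamma\}$. A term is guarded if it is a name, a variable, or headed by a constructor. An $E$-context is a term with holes built only from function symbols of $\Sigma_E$. $\Gamma,M$ means $\Gamma\cup\{M\}$. System $\mathcal N$ (judgments $\Gamma\vdash M$): ($id$) $\Gamma\vdash M$ if $M\in\Gamma$; ($e_E$) from $\Gamma\vdash\{M\}_K$, $\Gamma\vdash K$ infer $\Gamma\vdash M$; ($e_I$) from $\Gamma\vdash M$, $\Gamma\vdash K$ infer $\Gamma\vdash\{M\}_K$; ($p_E$) from $\Gamma\vdash\langle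 M,N\rangle$ infer $\Gamma\vdash M$, and also infer $\Gamma\vdash N$; ($p_I$) from $\Gamma\vdash M$, $\Gamma\vdash N$ infer $\Gamma\vdash\langle M,N\rangle$; ($\mathsf{sign}_E$) from $\Gamma\vdash\mathsf{sign}(M,K)$, $\Gamma\vdash\mathsf{pub}(K)$ infer $\Gamma\vdash M$; ($\mathsf{sign}_I$) from $\Gamma\vdash M$, $\Gamma\vdash K$ infer $\Gamma\vdash\mathsf{sign}(M,K)$; ($\mathsf{blind}_{E1}$) from $\Gamma\vdash\mathsf{blind}(M,K)$, $\Gamma\vdash K$ infer $\Gamma\vdash M$; ($\mathsf{blind}_I$) from $\Gamma\vdash M$, $\Gamma\vdash K$ infer $\Gamma\vdash\mathsf{blind}(M,K)$; ($\mathsf{blind}_{E2}$) from $\Gamma\vdash\mathsf{sign}(\mathsf{blind}(M,R),K)$, $\Gamma\vdash R$ infer $\Gamma\vdash\mathsf{sign}(M,K)$; ($g_I$, $g\in\Sigma_E$) from $\Gamma\vdash M_1,\dots,\Gamma\vdash M_j$ infer $\Gamma\vdash g(M_1,\dots,M_j)$; ($\approx$) from $\Gamma\vdash N$ infer $\Gamma\vdash M$ if $M\approx_E N$. System $\mathcal S$ (sequents all of whose terms are in normal form): (id) $\Gamma\vdash M$ with no premise if $M\approx_E C[M_1,\dots,M_k]$ for some $E$-context $C$ and $M_i\in\Gamma$; (cut) from $\Gamma\vdash M$, $\Gamma,M\vdash T$ infer $\Gamma\vdash T$; ($p_L$) from $\Gamma,\langle M,N\rangle,M,N\vdash T$ infer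 $\Gamma,\langle M,N\rangle\vdash T$; ($p_R$) from $\Gamma\vdash M$, $\Gamma\vdash N$ infer $\Gamma\vdash\langle M,N\rangle$; ($e_L$) from $\Gamma,\{M\}_K\vdash K$ and $\Gamma,\{M\}_K,M,K\vdash N$ infer $\Gamma,\{M\}_K\vdash N$; ($e_R$) from $\Gamma\vdash M$, $\Gamma\vdash K$ infer $\Gamma\vdash\{M\}_K$; ($\mathsf{sign}_L$) from $\Gamma,\mathsf{sign}(M,K),\mathsf{pub}(L),M\vdash N$ infer $\Gamma,\mathsf{sign}(M,K),\mathsf{pub}(L)\vdash N$ provided $K\equiv L$; ($\mathsf{sign}_R$) from $\Gamma\vdash M$, $\Gamma\vdash K$ infer $\Gamma\vdash\mathsf{sign}(M,K)$; ($\mathsf{blind}_{L1}$) from $\Gamma,\mathsf{blind}(M,K)\vdash K$ and $\Gamma,\mathsf{blind}(M,K),M,K\vdash N$ infer $\Gamma,\mathsf{blind}(M,K)\vdash N$; ($\mathsf{blind}_R$) from $\Gamma\vdash M$, $\Gamma\vdash K$ infer $\Gamma\vdash\mathsf{blind}(M,K)$; ($\mathsf{blind}_{L2}$) from $\Gamma,\mathsf{sign}(\mathsf{blind}(M,R),K)\vdash R$ and $\Gamma,\mathsf{sign}(\mathsf{blind}(M,R),K),\mathsf{sign}(M,K),R\vdash N$ infer $\Gamma,\mathsf{sign}(\mathsf{blind}(M,R),K)\vdash N$; ($gs$) from $\Gamma\vdash A$, $\Gamma,A\vdash M$ infer $\Gamma\vdash M$, provided $A$ is a guarded subterm of a term in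 $\Gamma\cup\{M\}$. *)

(* Defs.v *)
From Stdlib Require Import List Relations.
Import ListNotations.
Set Implicit Arguments.

Section Terms.

(* Sigma_E: a type of function symbols with arities; disjoint from the
   constructors by construction of [term]. *)
Variable F : Type.
Variable arity : F -> nat.
(* the (at most one) AC symbol *)
Variable oplus : option F.

Inductive term : Type :=
| Name  : nat -> term
| Var   : nat -> term
| Pub   : term -> term
| Sign  : term -> term -> term
| Blind : term -> term -> term
| Pair  : term -> term -> term
| Enc   : term -> term -> term
| Fn    : F -> list term -> term.

Fixpoint wf (t : term) : Prop :=
  match t with
  | Name _ | Var _ => True
  | Pub a => wf a
  | Sign a b | Blind a b | Pair a b | Enc a b => wf a /\ wf b
  | Fn f args =>
      length args = arity f /\
      (fix go (l : list term) : Prop :=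
         match l with [] => True | a :: l' => wf a /\ go l' end) args
  end.

Fixpoint ground (t : term) : Prop :=
  match t with
  | Name _ => True
  | Var _ => False
  | Pub a => ground a
  | Sign a b | Blind a b | Pair a b | Enc a b => ground a /\ ground b
  | Fn f args =>
      (fix go (l : list term) : Prop :=
         match l with [] => True | a :: l' => ground a /\ go l' end) args
  end.

Definition gterm (t : term) : Prop := wf t /\ ground t.

Fixpoint Eterm (t : term) : Prop :=
  match t with
  | Var _ => True
  | Fn f args =>
      (fix go (l : list term) : Prop :=
         match l with [] => True | a :: l' => Eterm a /\ go l' end) args
  | _ => False
  end.

Fixpoint subst (s : nat -> term) (t : term) : term :=
  match t with
  | Name n => Name n
  | Var n => s n
  | Pub a => Pub (subst s a)
  | Sign a b => Sign (subst s a) (subst s b)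
  | Blind a b => Blind (subst s a) (subst s b)
  | Pair a b => Pair (subst s a) (subst s b)
  | Enc a b => Enc (subst s a) (subst s b)
  | Fn f args => Fn f (map (subst s) args)
  end.

Inductive isub : term -> term -> Prop :=
| isub_pub a : isub a (Pub a)
| isub_sign1 a b : isub a (Sign a b)
| isub_sign2 a b : isub b (Sign a b)
| isub_blind1 a b : isub a (Blind a b)
| isub_blind2 a b : isub b (Blind a b)
| isub_pair1 a b : isub a (Pair a b)
| isub_pair2 a b : isub b (Pair a b)
| isub_enc1 a b : isub a (Enc a b)
| isub_enc2 a b : isub b (Enc a b)
| isub_fn f a args : In a args -> isub a (Fn f args).

Definition subterm : relation term := clos_refl_trans term isub.

Definition occurs_var (n : nat) (t : term) : Prop := subterm (Var n) t.

Definition guarded (t : term) : Prop :=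
  match t with Fn _ _ => False | _ => True end.

Inductive ctx_clos (R : relation term) : relation term :=
| cc_base a b : R a b -> ctx_clos R a b
| cc_pub a b : ctx_clos R a b -> ctx_clos R (Pub a) (Pub b)
| cc_sign1 a b c : ctx_clos R a b -> ctx_clos R (Sign a c) (Sign b c)
| cc_sign2 a b c : ctx_clos R a b -> ctx_clos R (Sign c a) (Sign c b)
| cc_blind1 a b c : ctx_clos R a b -> ctx_clos R (Blind a c) (Blind b c)
| cc_blind2 a b c : ctx_clos R a b -> ctx_clos R (Blind c a) (Blind c b)
| cc_pair1 a b c : ctx_clos R a b -> ctx_clos R (Pair a c) (Pair b c)
| cc_pair2 a b c : ctx_clos R a b -> ctx_clos R (Pair c a) (Pair c b)
| cc_enc1 a b c : ctx_clos R a b -> ctx_clos R (Enc a c) (Enc b c)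
| cc_enc2 a b c : ctx_clos R a b -> ctx_clos R (Enc c a) (Enc c b)
| cc_fn f l1 l2 a b : ctx_clos R a b ->
    ctx_clos R (Fn f (l1 ++ a :: l2)) (Fn f (l1 ++ b :: l2)).

Inductive ac_axiom : relation term :=
| ac_assoc o a b c : oplus = Some o ->
    ac_axiom (Fn o [Fn o [a; b]; c]) (Fn o [a; Fn o [b; c]])
| ac_comm o a b : oplus = Some o -> ac_axiom (Fn o [a; b]) (Fn o [b; a]).

Definition ac_eq : relation term := clos_refl_sym_trans term (ctx_clos ac_axiom).

Variable R : list (term * term).

Definition rule_inst (t u : term) : Prop :=
  exists l r s, In (l, r) R /\ t = subst s l /\ u = subst s r.

Definition rstep : relation term := ctx_clos rule_inst.

Definition rstepAC (t u : term) : Prop :=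
  exists t' u', ac_eq t t' /\ rstep t' u' /\ ac_eq u' u.

Definition E_eq : relation term :=
  clos_refl_sym_trans term (union term rstep (ctx_clos ac_axiom)).

Definition irreducible (t : term) : Prop := forall u, ~ rstepAC t u.

Definition is_nf_of (t n : term) : Prop :=
  clos_refl_trans term rstepAC t n /\ irreducible n.

Record presentation : Prop := {
  oplus_binary : forall o, oplus = Some o -> arity o = 2;
  rules_over_SigmaE : forall l r, In (l, r) R ->
      Eterm l /\ Eterm r /\ wf l /\ wf r;
  rules_lhs_not_var : forall l r, In (l, r) R -> forall n, l <> Var n;
  rules_vars : forall l r, In (l, r) R ->
      forall n, occurs_var n r -> occurs_var n l;
  R_terminating : well_founded (fun u t => rstepAC t u);
  R_confluent_modAC : forall t u1 u2,
      clos_refl_trans term rstepAC t u1 -> clos_refl_trans term rstepAC t u2 ->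
      exists v1 v2, clos_refl_trans term rstepAC u1 v1 /\
                    clos_refl_trans term rstepAC u2 v2 /\ ac_eq v1 v2
}.

Inductive ND (G : list term) : term -> Prop :=
| N_id M : In M G -> ND G M
| N_eE M K : ND G (Enc M K) -> ND G K -> ND G M
| N_eI M K : ND G M -> ND G K -> ND G (Enc M K)
| N_pE1 M N : ND G (Pair M N) -> ND G M
| N_pE2 M N : ND G (Pair M N) -> ND G N
| N_pI M N : ND G M -> ND G N -> ND G (Pair M N)
| N_signE M K : ND G (Sign M K) -> ND G (Pub K) -> ND G M
| N_signI M K : ND G M -> ND G K -> ND G (Sign M K)
| N_blindE1 M K : ND G (Blind M K) -> ND G K -> ND G M
| N_blindI M K : ND G M -> ND G K -> ND G (Blind M K)
| N_blindE2 M Rr K : ND G (Sign (Blind M Rr) K) -> ND G Rr -> ND G (Sign M K)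
| N_gI f args : length args = arity f -> Forall (ND G) args -> ND G (Fn f args)
| N_approx M N : ND G N -> E_eq M N -> gterm M -> ND G M.

Definition valid_seq (G : list term) (T : term) : Prop :=
  forall t, In t (T :: G) -> gterm t /\ irreducible t.

(* C[M1,...,Mk] with C an E-context (only Sigma_E symbols) and Mi in G *)
Inductive ectx (G : list term) : term -> Prop :=
| ectx_hole M : In M G -> ectx G M
| ectx_fn f args : length args = arity f -> Forall (ectx G) args ->
    ectx G (Fn f args).

Inductive SC : list term -> term -> Prop :=
| S_id G M C : valid_seq G M -> ectx G C -> E_eq M C -> SC G M
| S_cut G M T : valid_seq G T -> SC G M -> SC (M :: G) T -> SC G T
| S_pL G M N T : valid_seq G T -> In (Pair M N) G ->
    SC (M :: N :: G) T -> SC G T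
| S_pR G M N : valid_seq G (Pair M N) -> SC G M -> SC G N -> SC G (Pair M N)
| S_eL G M K N : valid_seq G N -> In (Enc M K) G ->
    SC G K -> SC (M :: K :: G) N -> SC G N
| S_eR G M K : valid_seq G (Enc M K) -> SC G M -> SC G K -> SC G (Enc M K)
| S_signL G M K L N : valid_seq G N -> In (Sign M K) G -> In (Pub L) G ->
    ac_eq K L -> SC (M :: G) N -> SC G N
| S_signR G M K : valid_seq G (Sign M K) -> SC G M -> SC G K -> SC G (Sign M K)
| S_blindL1 G M K N : valid_seq G N -> In (Blind M K) G ->
    SC G K -> SC (M :: K :: G) N -> SC G N
| S_blindR G M K : valid_seq G (Blind M K) -> SC G M -> SC G K ->
    SC G (Blind M K)
| S_blindL2 G M Rr K N : valid_seq G N -> In (Sign (Blind M Rr) K) G ->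
    SC G Rr -> SC (Sign M K :: Rr :: G) N -> SC G N
| S_gs G A M : valid_seq G M ->
    (exists t, In t (M :: G) /\ subterm A t) -> guarded A ->
    SC G A -> SC (A :: G) M -> SC G M.

End Terms.

(* Main.v *)
Require Import Defs.
From Stdlib Require Import List Relations.
Import ListNotations.
Set Implicit Arguments. Unset Strict Implicit.

Section Proof.
Variable F : Type.
Variable arity : F -> nat.
Variable oplus : option F.
Variable R : list (term F * term F).
Hypothesis HE : presentation arity oplus R.

Notation term := (term F).
Notation gterm := (gterm arity).
Notation ac_eq := (ac_eq oplus).
Notation E_eq := (E_eq oplus R).
Notation rstep := (rstep R).
Notation rstepAC := (rstepAC oplus R).
Notation irreducible := (irreducible oplus R).
Notation rt := (clos_refl_trans term rstepAC).
Notation ND := (ND arity oplus R).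
Notation SC := (SC arity oplus R).
Implicit Types (a b c x y t u v r T : term) (s : nat -> term).

Definition isFn (t : term) : Prop := match t with Fn _ _ => True | _ => False end.

Definition cmatch (Q : relation term) (t u : term) : Prop :=
  match t, u with
  | Name _ n, Name _ m => n = m
  | Var _ n, Var _ m => n = m
  | Pub a, Pub b => Q a b
  | Sign a1 a2, Sign b1 b2 => Q a1 b1 /\ Q a2 b2
  | Blind a1 a2, Blind b1 b2 => Q a1 b1 /\ Q a2 b2
  | Pair a1 a2, Pair b1 b2 => Q a1 b1 /\ Q a2 b2
  | Enc a1 a2, Enc b1 b2 => Q a1 b1 /\ Q a2 b2
  | _, _ => False
  end.

Lemma cmatch_notFn Q t u : cmatch Q t u -> ~ isFn t /\ ~ isFn u.
Proof. destruct t, u; simpl; tauto. Qed.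

Lemma cmatch_mono (Q1 Q2 : relation term) t u :
  (forall a b, Q1 a b -> Q2 a b) -> cmatch Q1 t u -> cmatch Q2 t u.
Proof. intro H; destruct t, u; simpl; intuition. Qed.

Lemma cmatch_refl (Q : relation term) t : (forall a, Q a a) -> ~ isFn t -> cmatch Q t t.
Proof. intros H Hn; destruct t; simpl in *; intuition. Qed.

Lemma cmatch_sym (Q : relation term) t u : (forall a b, Q a b -> Q b a) ->
  cmatch Q t u -> cmatch Q u t.
Proof. intro H; destruct t, u; simpl; intuition. Qed.

Lemma cmatch_trans (Q1 Q2 Q3 : relation term) t u v :
  (forall a b c, Q1 a b -> Q2 b c -> Q3 a c) ->
  cmatch Q1 t u -> cmatch Q2 u v -> cmatch Q3 t v.
Proof. intro H; destruct t, u, v; simpl; intuition eauto; congruence. Qed.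

Unset Implicit Arguments.
Fixpoint term_ind2 (P : term -> Prop)
  (hN : forall n, P (Name F n)) (hV : forall n, P (Var F n))
  (hP : forall a, P a -> P (Pub a))
  (hS : forall a b, P a -> P b -> P (Sign a b))
  (hB : forall a b, P a -> P b -> P (Blind a b))
  (hPa : forall a b, P a -> P b -> P (Pair a b))
  (hE : forall a b, P a -> P b -> P (Enc a b))
  (hF : forall f args, Forall P args -> P (Fn f args)) (t : term) {struct t} : P t :=
  match t with
  | Name _ n => hN n | Var _ n => hV n
  | Pub a => hP a (term_ind2 P hN hV hP hS hB hPa hE hF a)
  | Sign a b => hS a b (term_ind2 P hN hV hP hS hB hPa hE hF a) (term_ind2 P hN hV hP hS hB hPa hE hF b)
  | Blind a b => hB a b (term_ind2 P hN hV hP hS hB hPa hE hF a) (term_ind2 P hN hV hP hS hB hPa hE hF b)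
  | Pair a b => hPa a b (term_ind2 P hN hV hP hS hB hPa hE hF a) (term_ind2 P hN hV hP hS hB hPa hE hF b)
  | Enc a b => hE a b (term_ind2 P hN hV hP hS hB hPa hE hF a) (term_ind2 P hN hV hP hS hB hPa hE hF b)
  | Fn f args => hF f args
      ((fix go (l : list term) : Forall P l :=
          match l with [] => Forall_nil P
          | x :: l' => Forall_cons x (term_ind2 P hN hV hP hS hB hPa hE hF x) (go l') end) args)
  end.

Set Implicit Arguments.
Lemma wf_Fn f args : wf arity (Fn f args) <-> length args = arity f /\ Forall (wf arity) args.
Proof.
  simpl. split; intros [H1 H2]; split; auto.
  - clear H1; induction args; simpl in *; constructor; tauto.
  - clear H1; induction args; simpl in *; auto; inversion H2; subst; tauto.
Qed.

Lemma ground_Fn (f:F) (args : list term) : ground (Fn f args) <-> Forall (@ground F) args.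
Proof.
  simpl. induction args; simpl; split; intro H; auto.
  - constructor; tauto.
  - inversion H; subst; tauto.
Qed.

Lemma gterm_Fn f args : gterm (Fn f args) <-> length args = arity f /\ Forall gterm args.
Proof.
  unfold Defs.gterm. rewrite wf_Fn, ground_Fn.
  split.
  - intros [[H1 H2] H3]; split; auto. clear H1. induction args; auto.
    inversion H2; inversion H3; subst; constructor; auto.
  - intros [H1 H2]; split; [split|]; auto; clear H1; induction H2; constructor; tauto.
Qed.

Lemma isub_gterm a b : isub a b -> gterm b -> gterm a.
Proof.
  intros H Hb. destruct H; try (unfold Defs.gterm in *; simpl in *; tauto).
  apply gterm_Fn in Hb. destruct Hb as [_ Hb]. rewrite Forall_forall in Hb; auto.
Qed.

Lemma subterm_gterm a b : subterm a b -> gterm b -> gterm a.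
Proof. induction 1; eauto using isub_gterm. Qed.


Lemma ctx_clos_pres (P : term -> Prop) (Q : relation term)
  (HP : forall a, P (Pub a) <-> P a)
  (HS : forall a b, P (Sign a b) <-> P a /\ P b)
  (HB : forall a b, P (Blind a b) <-> P a /\ P b)
  (HPa : forall a b, P (Pair a b) <-> P a /\ P b)
  (HEn : forall a b, P (Enc a b) <-> P a /\ P b)
  (HF : forall f l1 a b l2, P (Fn f (l1 ++ a :: l2)) -> (P a -> P b) -> P (Fn f (l1 ++ b :: l2)))
  (HQ : forall a b, Q a b -> P a -> P b) :
  forall a b, ctx_clos Q a b -> P a -> P b.
Proof.
  induction 1; intros;
  repeat match goal with H : _ |- _ => (rewrite HP in H || rewrite HS in H || rewrite HB in H
      || rewrite HPa in H || rewrite HEn in H) end;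
  repeat (rewrite HP || rewrite HS || rewrite HB || rewrite HPa || rewrite HEn); try tauto; eauto.
Qed.

Lemma gterm_Fn_app f l1 a b l2 : gterm (Fn f (l1 ++ a :: l2)) -> (gterm a -> gterm b) ->
  gterm (Fn f (l1 ++ b :: l2)).
Proof.
  rewrite !gterm_Fn. intros [H1 H2] H. split.
  - rewrite length_app in *; simpl in *; auto.
  - apply Forall_app in H2. destruct H2 as [H2 H3]. inversion H3; subst.
    apply Forall_app; split; auto.
Qed.

Ltac gsimp := unfold Defs.gterm in *; simpl in *; tauto.

Lemma ctx_clos_gterm (Q : relation term) (HQ : forall a b, Q a b -> gterm a -> gterm b) :
  forall a b, ctx_clos Q a b -> gterm a -> gterm b.
Proof.
  apply ctx_clos_pres; try (intros; gsimp); auto. apply gterm_Fn_app.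
Qed.

Lemma ac_axiom_gterm a b : ac_axiom oplus a b -> (gterm a <-> gterm b).
Proof.
  destruct 1 as [o a b c Ho | o a b Ho]; pose proof (oplus_binary HE Ho);
  repeat (rewrite gterm_Fn || rewrite Forall_cons_iff); simpl; rewrite H; tauto.
Qed.

Lemma ctx_clos_transp (Q : relation term) a b : ctx_clos Q a b -> ctx_clos (transp _ Q) b a.
Proof. induction 1; [apply cc_base; exact H|apply cc_pub|apply cc_sign1|apply cc_sign2|apply cc_blind1|apply cc_blind2|apply cc_pair1|apply cc_pair2|apply cc_enc1|apply cc_enc2|apply cc_fn]; auto. Qed.

Lemma ctx_clos_mono (Q1 Q2 : relation term) : (forall a b, Q1 a b -> Q2 a b) ->
  forall a b, ctx_clos Q1 a b -> ctx_clos Q2 a b.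
Proof. intro H; induction 1; [apply cc_base; auto|apply cc_pub|apply cc_sign1|apply cc_sign2|apply cc_blind1|apply cc_blind2|apply cc_pair1|apply cc_pair2|apply cc_enc1|apply cc_enc2|apply cc_fn]; auto. Qed.

Lemma ac_step_gterm a b : ctx_clos (ac_axiom oplus) a b -> (gterm a <-> gterm b).
Proof.
  intro H; split; intro.
  - refine (ctx_clos_gterm _ H _); auto. intros x y Hxy; apply (ac_axiom_gterm Hxy); auto.
  - apply ctx_clos_transp in H. refine (ctx_clos_gterm _ H _); auto.
    intros x y Hxy; unfold transp in Hxy. apply (ac_axiom_gterm Hxy); auto.
Qed.

Lemma ac_eq_gterm a b : ac_eq a b -> (gterm a <-> gterm b).
Proof.
  induction 1; try tauto. apply ac_step_gterm; auto.
Qed.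

Lemma isub_subst s x t : isub x t -> isub (subst s x) (subst s t).
Proof. destruct 1; simpl; constructor; auto. apply in_map; auto. Qed.

Lemma subterm_subst s x t : subterm x t -> subterm (subst s x) (subst s t).
Proof.
  induction 1; [apply rt_step; apply isub_subst; auto | apply rt_refl | eapply rt_trans; eauto].
Qed.

Lemma gterm_subst s r : wf arity r -> (forall n, occurs_var n r -> gterm (s n)) ->
  gterm (subst s r).
Proof.
  unfold occurs_var.
  induction r using term_ind2; intros Hw Hs; simpl.
  1: gsimp.
  1: apply Hs; apply rt_refl.
  1: assert (gterm (subst s r)) by (apply IHr; auto; intros n Hn; apply Hs;
      apply rt_trans with r; [exact Hn| apply rt_step; constructor]). gsimp.
  1-4: (simpl in Hw; destruct Hw as [Hw1 Hw2];
    assert (gterm (subst s r1)) by (apply IHr1; auto; intros n Hn; apply Hs;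
      apply rt_trans with r1; [exact Hn| apply rt_step; constructor]);
    assert (gterm (subst s r2)) by (apply IHr2; auto; intros n Hn; apply Hs;
      apply rt_trans with r2; [exact Hn| apply rt_step; constructor]); gsimp).
  apply wf_Fn in Hw. destruct Hw as [Hl Hw].
  apply gterm_Fn. rewrite length_map. split; auto.
  rewrite Forall_forall in *. intros y Hy. apply in_map_iff in Hy.
  destruct Hy as [x [<- Hx]]. apply H; auto. intros n Hn; apply Hs.
  eapply rt_trans; eauto; apply rt_step; constructor; auto.
Qed.

Lemma rule_inst_gterm a b : rule_inst R a b -> gterm a -> gterm b.
Proof.
  intros (l & r & s & Hin & -> & ->) Ha.
  destruct (@rules_over_SigmaE _ _ _ _ HE _ _ Hin) as (_ & _ & _ & Hwr).
  apply gterm_subst; auto. intros n Hn.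
  apply (@rules_vars _ _ _ _ HE _ _ Hin) in Hn.
  apply subterm_subst with (s := s) in Hn. simpl in Hn.
  eapply subterm_gterm; eauto.
Qed.

Lemma rstepAC_gterm a b : rstepAC a b -> gterm a -> gterm b.
Proof.
  intros (a' & b' & H1 & H2 & H3) Ha.
  apply (ac_eq_gterm H3). eapply ctx_clos_gterm; [apply rule_inst_gterm| eauto |].
  apply (ac_eq_gterm H1); auto.
Qed.

Lemma rt_gterm a b : rt a b -> gterm a -> gterm b.
Proof. induction 1; eauto using rstepAC_gterm. Qed.


Lemma ctx_clos_rigid (Q : relation term) (HQ : forall a b, Q a b -> isFn a) t u :
  ctx_clos Q t u -> ~ isFn t -> cmatch (fun x y => x = y \/ ctx_clos Q x y) t u.
Proof.
  destruct 1; simpl; intros; auto.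
  exfalso; eauto.
Qed.

Lemma ac_axiom_Fn a b : ac_axiom oplus a b -> isFn a /\ isFn b.
Proof. destruct 1; simpl; auto. Qed.

Lemma ac_step_ac a b : ctx_clos (ac_axiom oplus) a b -> ac_eq a b.
Proof. intro; apply rst_step; auto. Qed.

Lemma ac_eq_sym a b : ac_eq a b -> ac_eq b a.
Proof. apply rst_sym. Qed.
Lemma ac_eq_trans a b c : ac_eq a b -> ac_eq b c -> ac_eq a c.
Proof. apply rst_trans. Qed.
Lemma ac_eq_refl a : ac_eq a a.
Proof. apply rst_refl. Qed.

Lemma ac_eq_rigid t u : ac_eq t u ->
  (~ isFn t -> cmatch ac_eq t u) /\ (~ isFn u -> cmatch ac_eq t u).
Proof.
  induction 1.
  - split; intro Hn.
    + eapply cmatch_mono; [|apply ctx_clos_rigid; eauto].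
      * intros a b [<-|Hab]; [apply ac_eq_refl|apply ac_step_ac; auto].
      * intros a b Hab; apply (ac_axiom_Fn Hab).
    + apply ctx_clos_transp in H.
      apply cmatch_sym; [apply ac_eq_sym|].
      eapply cmatch_mono; [|apply ctx_clos_rigid; eauto].
      * intros a b [<-|Hab]; [apply ac_eq_refl|].
        apply ctx_clos_transp in Hab. apply ac_eq_sym, ac_step_ac; auto.
      * intros a b Hab; apply (ac_axiom_Fn Hab).
  - split; intro; apply cmatch_refl; auto; apply ac_eq_refl.
  - destruct IHclos_refl_sym_trans as [H1 H2]; split; intro;
    apply cmatch_sym; auto; apply ac_eq_sym.
  - destruct IHclos_refl_sym_trans1 as [H1 H2], IHclos_refl_sym_trans2 as [H3 H4].
    split; intro Hn.
    + pose proof (H1 Hn) as Hc. pose proof (proj2 (cmatch_notFn Hc)).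
      eapply cmatch_trans; eauto. apply ac_eq_trans.
    + pose proof (H4 Hn) as Hc. pose proof (proj1 (cmatch_notFn Hc)).
      eapply cmatch_trans; eauto. apply ac_eq_trans.
Qed.

Lemma ac_E a b : ac_eq a b -> E_eq a b.
Proof.
  induction 1; [apply rst_step; right; auto|apply rst_refl|apply rst_sym; auto|eapply rst_trans; eauto].
Qed.

Lemma rstep_E a b : rstep a b -> E_eq a b.
Proof. intro; apply rst_step; left; auto. Qed.

Lemma E_trans a b c : E_eq a b -> E_eq b c -> E_eq a c.
Proof. apply rst_trans. Qed.
Lemma E_sym a b : E_eq a b -> E_eq b a.
Proof. apply rst_sym. Qed.
Lemma E_refl a : E_eq a a.
Proof. apply rst_refl. Qed.

Lemma rstepAC_E a b : rstepAC a b -> E_eq a b.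
Proof.
  intros (a' & b' & H1 & H2 & H3).
  eapply E_trans; [apply ac_E; eauto|]. eapply E_trans; [apply rstep_E; eauto| apply ac_E; auto].
Qed.

Lemma rt_E a b : rt a b -> E_eq a b.
Proof. induction 1; eauto using rstepAC_E, E_refl, E_trans. Qed.

Lemma rule_inst_Fn a b : rule_inst R a b -> isFn a.
Proof.
  intros (l & r & s & Hin & -> & ->).
  destruct (@rules_over_SigmaE _ _ _ _ HE _ _ Hin) as (Hl & _).
  pose proof (@rules_lhs_not_var _ _ _ _ HE _ _ Hin).
  destruct l; simpl in *; auto. destruct (H n eq_refl).
Qed.

Lemma rstepAC_rigid t u : rstepAC t u -> ~ isFn t -> cmatch E_eq t u.
Proof.
  intros (t' & u' & H1 & H2 & H3) Hn.
  pose proof (proj1 (ac_eq_rigid H1) Hn) as C1.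
  pose proof (proj2 (cmatch_notFn C1)) as Hn'.
  pose proof (ctx_clos_rigid rule_inst_Fn H2 Hn') as C2.
  pose proof (proj2 (cmatch_notFn C2)) as Hn''.
  pose proof (proj1 (ac_eq_rigid H3) Hn'') as C3.
  eapply cmatch_trans; [| eapply cmatch_mono; [|exact C1]|].
  3: eapply cmatch_trans; [| exact C2 | exact C3].
  - intros a b c; apply E_trans.
  - apply ac_E.
  - intros a b c [<-|Hab] Hbc; apply ac_E in Hbc; auto.
    eapply E_trans; [apply rstep_E|]; eauto.
Qed.

Lemma rt_rigid t u : rt t u -> ~ isFn t -> cmatch E_eq t u.
Proof.
  induction 1; intro Hn.
  - apply rstepAC_rigid; auto.
  - apply cmatch_refl; auto; apply E_refl.
  - pose proof (IHclos_refl_trans1 Hn) as C.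
    eapply cmatch_trans; [| exact C | apply IHclos_refl_trans2; apply (proj2 (cmatch_notFn C))].
    apply E_trans.
Qed.

Lemma rstepAC_acl x y z : ac_eq x y -> rstepAC y z -> rstepAC x z.
Proof.
  intros H (y' & z' & H1 & H2 & H3). exists y', z'; split; auto. eapply ac_eq_trans; eauto.
Qed.

Lemma coh x y z : ac_eq x y -> rt y z -> exists z', rt x z' /\ ac_eq z' z.
Proof.
  intros H Hr. apply clos_rt_rt1n in Hr. inversion Hr as [|y0 y1 z0 Hs Hr']; subst.
  - exists x; split; [apply rt_refl|auto].
  - exists z; split; [|apply ac_eq_refl].
    eapply rt_trans; [apply rt_step; eapply rstepAC_acl; eauto|apply clos_rt1n_rt; eauto].
Qed.

Lemma joinable t u : E_eq t u -> exists v1 v2, rt t v1 /\ rt u v2 /\ ac_eq v1 v2.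
Proof.
  induction 1.
  - destruct H.
    + exists y, y; repeat split; [apply rt_step; exists x, y; repeat split; auto; apply ac_eq_refl|apply rt_refl|apply ac_eq_refl].
    + exists x, y; repeat split; try apply rt_refl. apply ac_step_ac; auto.
  - exists x, x; repeat split; try apply rt_refl; apply ac_eq_refl.
  - destruct IHclos_refl_sym_trans as (v1 & v2 & H1 & H2 & H3).
    exists v2, v1; repeat split; auto; apply ac_eq_sym; auto.
  - destruct IHclos_refl_sym_trans1 as (v1 & v2 & H1 & H2 & H3).
    destruct IHclos_refl_sym_trans2 as (v3 & v4 & H4 & H5 & H6).
    destruct (R_confluent_modAC HE H2 H4) as (a & b & Ha & Hb & Hab).
    destruct (coh H3 Ha) as (a1 & Ha1 & Ha1').
    destruct (coh (ac_eq_sym H6) Hb) as (b1 & Hb1 & Hb1').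
    exists a1, b1; repeat split.
    + eapply rt_trans; eauto.
    + eapply rt_trans; eauto.
    + eapply ac_eq_trans; [eauto|]. eapply ac_eq_trans; [eauto|]. apply ac_eq_sym; auto.
Qed.

Lemma irreducible_rt x y : irreducible x -> rt x y -> y = x.
Proof.
  intros Hx H. apply clos_rt_rt1n in H. destruct H; auto. exfalso; eapply Hx; eauto.
Qed.

Lemma irr_E_ac a b : irreducible a -> irreducible b -> E_eq a b -> ac_eq a b.
Proof.
  intros Ha Hb H. destruct (joinable H) as (v1 & v2 & H1 & H2 & H3).
  apply irreducible_rt in H1; apply irreducible_rt in H2; subst; auto.
Qed.

Lemma rigid_inv T X : irreducible T -> E_eq T X -> ~ isFn X -> cmatch E_eq X T.
Proof.
  intros HT H Hn. destruct (joinable H) as (v1 & v2 & H1 & H2 & H3).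
  apply irreducible_rt in H1; auto; subst.
  pose proof (rt_rigid H2 Hn) as C.
  pose proof (proj2 (cmatch_notFn C)) as Hn'.
  pose proof (proj1 (ac_eq_rigid (ac_eq_sym H3)) Hn') as C2.
  eapply cmatch_trans; [|exact C| eapply cmatch_mono; [apply ac_E|exact C2]].
  apply E_trans.
Qed.


Definition cong (f : term -> term) : Prop :=
  forall (Q : relation term) a b, ctx_clos Q a b -> ctx_clos Q (f a) (f b).

Lemma ac_map f : cong f -> forall a b, ac_eq a b -> ac_eq (f a) (f b).
Proof.
  intros Hf a b; induction 1; [apply rst_step; apply Hf; auto|apply rst_refl|apply rst_sym; auto|eapply rst_trans; eauto].
Qed.

Lemma E_map f : cong f -> forall a b, E_eq a b -> E_eq (f a) (f b).
Proof.
  intros Hf a b; induction 1; [|apply rst_refl|apply rst_sym; auto|eapply rst_trans; eauto].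
  apply rst_step. destruct H; [left|right]; apply Hf; auto.
Qed.

Lemma irr_map f : cong f -> forall a, irreducible (f a) -> irreducible a.
Proof.
  intros Hf a H u (a' & u' & H1 & H2 & H3). apply (H (f u)).
  exists (f a'), (f u'); repeat split; try (apply ac_map; auto). apply Hf; auto.
Qed.

Lemma cong_Pub : cong (@Pub F). Proof. intros Q a b H; apply cc_pub; auto. Qed.
Lemma cong_Sign1 c : cong (fun x => Sign x c). Proof. intros Q a b H; apply cc_sign1; auto. Qed.
Lemma cong_Sign2 c : cong (fun x => Sign c x). Proof. intros Q a b H; apply cc_sign2; auto. Qed.
Lemma cong_Blind1 c : cong (fun x => Blind x c). Proof. intros Q a b H; apply cc_blind1; auto. Qed.
Lemma cong_Blind2 c : cong (fun x => Blind c x). Proof. intros Q a b H; apply cc_blind2; auto. Qed.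
Lemma cong_Pair1 c : cong (fun x => Pair x c). Proof. intros Q a b H; apply cc_pair1; auto. Qed.
Lemma cong_Pair2 c : cong (fun x => Pair c x). Proof. intros Q a b H; apply cc_pair2; auto. Qed.
Lemma cong_Enc1 c : cong (fun x => Enc x c). Proof. intros Q a b H; apply cc_enc1; auto. Qed.
Lemma cong_Enc2 c : cong (fun x => Enc c x). Proof. intros Q a b H; apply cc_enc2; auto. Qed.
Lemma cong_Fn f l1 l2 : cong (fun x => Fn f (l1 ++ x :: l2)). Proof. intros Q a b H; apply cc_fn; auto. Qed.

Lemma E_Pub a b : E_eq a b -> E_eq (Pub a) (Pub b).
Proof. apply E_map, cong_Pub. Qed.
Lemma E_Sign a a' b b' : E_eq a a' -> E_eq b b' -> E_eq (Sign a b) (Sign a' b').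
Proof. intros; eapply E_trans; [apply (E_map (cong_Sign1 b)); eauto | apply (E_map (cong_Sign2 a')); eauto]. Qed.
Lemma E_Blind a a' b b' : E_eq a a' -> E_eq b b' -> E_eq (Blind a b) (Blind a' b').
Proof. intros; eapply E_trans; [apply (E_map (cong_Blind1 b)); eauto | apply (E_map (cong_Blind2 a')); eauto]. Qed.
Lemma E_Pair a a' b b' : E_eq a a' -> E_eq b b' -> E_eq (Pair a b) (Pair a' b').
Proof. intros; eapply E_trans; [apply (E_map (cong_Pair1 b)); eauto | apply (E_map (cong_Pair2 a')); eauto]. Qed.
Lemma E_Enc a a' b b' : E_eq a a' -> E_eq b b' -> E_eq (Enc a b) (Enc a' b').
Proof. intros; eapply E_trans; [apply (E_map (cong_Enc1 b)); eauto | apply (E_map (cong_Enc2 a')); eauto]. Qed.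

Lemma E_Fn f args args' : Forall2 E_eq args args' -> E_eq (Fn f args) (Fn f args').
Proof.
  intro H. cut (forall l1, E_eq (Fn f (l1 ++ args)) (Fn f (l1 ++ args'))).
  { intro C; exact (C []). }
  induction H; intro l1; [apply E_refl|].
  eapply E_trans; [apply (E_map (cong_Fn f l1 l)); eauto|].
  specialize (IHForall2 (l1 ++ [y])). rewrite <- !app_assoc in IHForall2. exact IHForall2.
Qed.

Lemma irr_Sign a b : irreducible a -> irreducible b -> irreducible (Sign a b).
Proof.
  intros Ha Hb u (t' & u' & H1 & H2 & H3).
  pose proof (proj1 (ac_eq_rigid H1) (fun x : isFn (Sign a b) => x)) as C.
  destruct t'; simpl in C; try contradiction. destruct C as [C1 C2].
  inversion H2; subst.
  - apply rule_inst_Fn in H. simpl in H; auto.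
  - apply (Ha b0). exists t'1, b0; repeat split; auto; apply ac_eq_refl.
  - apply (Hb b0). exists t'2, b0; repeat split; auto; apply ac_eq_refl.
Qed.

Unset Implicit Arguments.
Fixpoint ND_ind2 (G : list term) (P : term -> Prop)
  (h_id : forall M, In M G -> P M)
  (h_eE : forall M K, ND G (Enc M K) -> P (Enc M K) -> ND G K -> P K -> P M)
  (h_eI : forall M K, ND G M -> P M -> ND G K -> P K -> P (Enc M K))
  (h_pE1 : forall M N, ND G (Pair M N) -> P (Pair M N) -> P M)
  (h_pE2 : forall M N, ND G (Pair M N) -> P (Pair M N) -> P N)
  (h_pI : forall M N, ND G M -> P M -> ND G N -> P N -> P (Pair M N))
  (h_sE : forall M K, ND G (Sign M K) -> P (Sign M K) -> ND G (Pub K) -> P (Pub K) -> P M)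
  (h_sI : forall M K, ND G M -> P M -> ND G K -> P K -> P (Sign M K))
  (h_bE1 : forall M K, ND G (Blind M K) -> P (Blind M K) -> ND G K -> P K -> P M)
  (h_bI : forall M K, ND G M -> P M -> ND G K -> P K -> P (Blind M K))
  (h_bE2 : forall M Rr K, ND G (Sign (Blind M Rr) K) -> P (Sign (Blind M Rr) K) -> ND G Rr -> P Rr -> P (Sign M K))
  (h_gI : forall f args, length args = arity f -> Forall (ND G) args -> Forall P args -> P (Fn f args))
  (h_ap : forall M N, ND G N -> P N -> E_eq M N -> gterm M -> P M)
  (M : term) (H : ND G M) {struct H} : P M :=
  let IH := ND_ind2 G P h_id h_eE h_eI h_pE1 h_pE2 h_pI h_sE h_sI h_bE1 h_bI h_bE2 h_gI h_ap in
  match H in Defs.ND _ _ _ _ M return P M with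
  | @N_id _ _ _ _ _ M h => h_id M h
  | @N_eE _ _ _ _ _ M K h1 h2 => h_eE M K h1 (IH _ h1) h2 (IH _ h2)
  | @N_eI _ _ _ _ _ M K h1 h2 => h_eI M K h1 (IH _ h1) h2 (IH _ h2)
  | @N_pE1 _ _ _ _ _ M N h1 => h_pE1 M N h1 (IH _ h1)
  | @N_pE2 _ _ _ _ _ M N h1 => h_pE2 M N h1 (IH _ h1)
  | @N_pI _ _ _ _ _ M N h1 h2 => h_pI M N h1 (IH _ h1) h2 (IH _ h2)
  | @N_signE _ _ _ _ _ M K h1 h2 => h_sE M K h1 (IH _ h1) h2 (IH _ h2)
  | @N_signI _ _ _ _ _ M K h1 h2 => h_sI M K h1 (IH _ h1) h2 (IH _ h2)
  | @N_blindE1 _ _ _ _ _ M K h1 h2 => h_bE1 M K h1 (IH _ h1) h2 (IH _ h2)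
  | @N_blindI _ _ _ _ _ M K h1 h2 => h_bI M K h1 (IH _ h1) h2 (IH _ h2)
  | @N_blindE2 _ _ _ _ _ M Rr K h1 h2 => h_bE2 M Rr K h1 (IH _ h1) h2 (IH _ h2)
  | @N_gI _ _ _ _ _ f args hl hf => h_gI f args hl hf
      ((fix go (l : list term) (hl : Forall (ND G) l) : Forall P l :=
          match hl with @Forall_nil _ _ => Forall_nil P
          | @Forall_cons _ _ x _ hx hl' => Forall_cons x (IH x hx) (go _ hl') end) args hf)
  | @N_approx _ _ _ _ _ M N h1 he hg => h_ap M N h1 (IH _ h1) he hg
  end.

Fixpoint ectx_ND (G : list term) (C : term) (H : ectx arity G C) {struct H} : ND G C :=
  match H in ectx _ _ C return ND G C with
  | @ectx_hole _ _ _ M h => @N_id _ arity oplus R G M h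
  | @ectx_fn _ _ _ f args hl hf => @N_gI _ arity oplus R G f args hl
      ((fix go (l : list term) (hl : Forall (ectx arity G) l) : Forall (ND G) l :=
          match hl with @Forall_nil _ _ => Forall_nil _
          | @Forall_cons _ _ x _ hx hl' => Forall_cons x (ectx_ND G x hx) (go _ hl') end) args hf)
  end.
Set Implicit Arguments.


Lemma ND_gterm G : (forall x, In x G -> gterm x) -> forall M, ND G M -> gterm M.
Proof.
  intro HG. apply (ND_ind2 G gterm); intros; try gsimp; auto.
  apply gterm_Fn; auto.
Qed.

Lemma ND_subst G1 G2 : (forall x, In x G1 -> ND G2 x) -> forall T, ND G1 T -> ND G2 T.
Proof.
  intro HG. apply (ND_ind2 G1 (ND G2)); intros; auto.
  - eapply N_eE; eauto.
  - apply N_eI; auto.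
  - eapply N_pE1; eauto.
  - eapply N_pE2; eauto.
  - apply N_pI; auto.
  - eapply N_signE; eauto.
  - apply N_signI; auto.
  - eapply N_blindE1; eauto.
  - apply N_blindI; auto.
  - eapply N_blindE2; eauto.
  - apply N_gI; auto.
  - eapply N_approx; eauto.
Qed.

Lemma valid_T G T : valid_seq arity oplus R G T -> gterm T /\ irreducible T.
Proof. intro H; apply H; left; auto. Qed.
Lemma valid_G G T : valid_seq arity oplus R G T -> forall x, In x G -> gterm x /\ irreducible x.
Proof. intros H x Hx; apply H; right; auto. Qed.

Lemma SC_valid G T : SC G T -> valid_seq arity oplus R G T.
Proof. destruct 1; auto. Qed.

Lemma SC_ND G T : SC G T -> ND G T.
Proof.
  induction 1.
  - eapply N_approx; [apply ectx_ND; eauto| auto | apply (proj1 (valid_T H))].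
  - apply (ND_subst (G1 := M :: G)); auto. intros x [<-|Hx]; auto. apply N_id; auto.
  - apply (ND_subst (G1 := M :: N :: G)); auto. intros x [<-|[<-|Hx]].
    + eapply N_pE1; apply N_id; eauto.
    + eapply N_pE2; apply N_id; eauto.
    + apply N_id; auto.
  - apply N_pI; auto.
  - apply (ND_subst (G1 := M :: K :: G)); auto. intros x [<-|[<-|Hx]]; auto.
    + eapply N_eE; [apply N_id; eauto| auto].
    + apply N_id; auto.
  - apply N_eI; auto.
  - apply (ND_subst (G1 := M :: G)); auto. intros x [<-|Hx]; [|apply N_id; auto].
    eapply N_signE; [apply N_id; eauto|].
    eapply N_approx; [apply N_id; exact H1| apply E_Pub, ac_E; auto |].
    destruct (valid_G H H0) as [Hg _]. gsimp.
  - apply N_signI; auto.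
  - apply (ND_subst (G1 := M :: K :: G)); auto. intros x [<-|[<-|Hx]]; auto.
    + eapply N_blindE1; [apply N_id; eauto| auto].
    + apply N_id; auto.
  - apply N_blindI; auto.
  - apply (ND_subst (G1 := Sign M K :: Rr :: G)); auto. intros x [<-|[<-|Hx]]; auto.
    + eapply N_blindE2; [apply N_id; eauto| auto].
    + apply N_id; auto.
  - apply (ND_subst (G1 := A :: G)); auto. intros x [<-|Hx]; auto. apply N_id; auto.
Qed.


Variable nf : term -> term.
Hypothesis Hnf : forall t, is_nf_of oplus R t (nf t).

Lemma nf_irr t : irreducible (nf t). Proof. apply (Hnf t). Qed.
Lemma nf_E t : E_eq (nf t) t. Proof. apply E_sym, rt_E, (Hnf t). Qed.
Lemma nf_gterm t : gterm t -> gterm (nf t). Proof. apply rt_gterm, (Hnf t). Qed.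

Lemma nf_rigid X : ~ isFn X -> cmatch E_eq X (nf X).
Proof. intro Hn. apply rigid_inv; auto using nf_irr, nf_E. Qed.

Definition valid_ctx (G : list term) := forall x, In x G -> gterm x /\ irreducible x.

Lemma valid_mk G T : valid_ctx G -> gterm T -> irreducible T -> valid_seq arity oplus R G T.
Proof. intros H1 H2 H3 t [<-|Ht]; auto. Qed.
Lemma valid_cons G x : gterm x -> irreducible x -> valid_ctx G -> valid_ctx (x :: G).
Proof. intros H1 H2 H3 t [<-|Ht]; auto. Qed.

Definition Der (B : list term) (M : term) : Prop :=
  forall G', incl B G' -> valid_ctx G' ->
  forall T, gterm T -> irreducible T -> E_eq T M -> SC G' T.

Lemma cut_list B (L : list term) : Forall (Der B) L -> Forall gterm L ->
  forall G', incl B G' -> valid_ctx G' -> forall T, gterm T -> irreducible T ->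
  (forall G'', incl (map nf L) G'' -> incl G' G'' -> valid_ctx G'' -> SC G'' T) -> SC G' T.
Proof.
  intros HD; induction HD as [|a L Ha HL IH]; intros Hg G' Hinc Hv T HgT HiT H.
  - apply H; auto. intros x []. apply incl_refl.
  - inversion Hg; subst.
    apply S_cut with (M := nf a).
    + apply valid_mk; auto.
    + apply Ha; auto using nf_gterm, nf_irr, nf_E.
    + apply IH; auto.
      * apply incl_tl; auto.
      * apply valid_cons; auto using nf_gterm, nf_irr.
      * intros G'' h1 h2 h3. apply H; auto.
        -- intros x [<-|Hx]; [apply h2; left; auto| apply h1; auto].
        -- intros x Hx; apply h2; right; auto.
Qed.

Ltac irrc H :=
  match type of H with
  | irreducible (Pub ?a) => pose proof (irr_map cong_Pub H)
  | irreducible (Sign ?a ?b) => pose proof (irr_map (cong_Sign1 b) H); pose proof (irr_map (cong_Sign2 a) H)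
  | irreducible (Blind ?a ?b) => pose proof (irr_map (cong_Blind1 b) H); pose proof (irr_map (cong_Blind2 a) H)
  | irreducible (Pair ?a ?b) => pose proof (irr_map (cong_Pair1 b) H); pose proof (irr_map (cong_Pair2 a) H)
  | irreducible (Enc ?a ?b) => pose proof (irr_map (cong_Enc1 b) H); pose proof (irr_map (cong_Enc2 a) H)
  end.

Ltac gcomp H :=
  match type of H with
  | gterm (Pub ?a) => assert (gterm a) by gsimp
  | gterm (Sign ?a ?b) => assert (gterm a) by gsimp; assert (gterm b) by gsimp
  | gterm (Blind ?a ?b) => assert (gterm a) by gsimp; assert (gterm b) by gsimp
  | gterm (Pair ?a ?b) => assert (gterm a) by gsimp; assert (gterm b) by gsimp
  | gterm (Enc ?a ?b) => assert (gterm a) by gsimp; assert (gterm b) by gsimp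
  end.

Ltac dnf X Hq C Hg Hi :=
  let Hn := fresh in let HEq := fresh "HEq" in
  assert (Hn : ~ isFn X) by (simpl; auto);
  pose proof (nf_rigid Hn) as C; clear Hn;
  pose proof (@nf_irr X) as Hi;
  destruct (nf X) eqn:Hq; simpl in C; try contradiction;
  assert (Hg : gterm (nf X)) by (apply nf_gterm; gsimp);
  rewrite Hq in Hg;
  pose proof (@nf_E X) as HEq; rewrite Hq in HEq.

Ltac vld := repeat (apply valid_cons; auto); auto.

Lemma main G : (forall x, In x G -> gterm x) -> forall M, ND G M -> Der (map nf G) M.
Proof.
  intro HG. pose proof (ND_gterm HG) as NG.
  apply (ND_ind2 G (Der (map nf G))).
  -
    intros M h G' Hinc Hv T HgT HiT HTE.
    apply S_id with (C := nf M); [apply valid_mk; auto| |].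
    + apply ectx_hole, Hinc, in_map; auto.
    + eapply E_trans; [exact HTE| apply E_sym, nf_E].
  -
    intros M K h1 D1 h2 D2 G' Hinc Hv T HgT HiT HTE.
    pose proof (NG _ h1) as Hg0.
    dnf (Enc M K) Hq C Hg Hi. destruct C as [C1 C2].
    irrc Hi. gcomp Hg.
    apply S_cut with (M := Enc t1 t2); [apply valid_mk; auto| |].
    + apply D1; auto.
    + apply S_eL with (M := t1) (K := t2); [apply valid_mk; vld| left; auto | |].
      * apply D2; auto; [apply incl_tl; auto| vld| apply E_sym; auto].
      * apply S_id with (C := t1); [apply valid_mk; vld| apply ectx_hole; left; auto|].
        eapply E_trans; eauto.
  -
    intros M K h1 D1 h2 D2 G' Hinc Hv T HgT HiT HTE.
    assert (Hn : ~ isFn (Enc M K)) by (simpl; auto).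
    pose proof (rigid_inv HiT HTE Hn) as C.
    destruct T; simpl in C; try contradiction. destruct C as [C1 C2].
    irrc HiT. gcomp HgT.
    apply S_eR; [apply valid_mk; auto| apply D1 | apply D2]; auto; apply E_sym; auto.
  -
    intros M N h1 D1 G' Hinc Hv T HgT HiT HTE.
    pose proof (NG _ h1) as Hg0.
    dnf (Pair M N) Hq C Hg Hi. destruct C as [C1 C2].
    irrc Hi. gcomp Hg.
    apply S_cut with (M := Pair t1 t2); [apply valid_mk; auto| |].
    + apply D1; auto.
    + apply S_pL with (M := t1) (N := t2); [apply valid_mk; vld| left; auto | ].
      apply S_id with (C := t1); [apply valid_mk; vld| apply ectx_hole; left; auto|].
      eapply E_trans; eauto.
  -
    intros M N h1 D1 G' Hinc Hv T HgT HiT HTE.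
    pose proof (NG _ h1) as Hg0.
    dnf (Pair M N) Hq C Hg Hi. destruct C as [C1 C2].
    irrc Hi. gcomp Hg.
    apply S_cut with (M := Pair t1 t2); [apply valid_mk; auto| |].
    + apply D1; auto.
    + apply S_pL with (M := t1) (N := t2); [apply valid_mk; vld| left; auto | ].
      apply S_id with (C := t2); [apply valid_mk; vld| apply ectx_hole; right; left; auto|].
      eapply E_trans; eauto.
  -
    intros M K h1 D1 h2 D2 G' Hinc Hv T HgT HiT HTE.
    assert (Hn : ~ isFn (Pair M K)) by (simpl; auto).
    pose proof (rigid_inv HiT HTE Hn) as C.
    destruct T; simpl in C; try contradiction. destruct C as [C1 C2].
    irrc HiT. gcomp HgT.
    apply S_pR; [apply valid_mk; auto| apply D1 | apply D2]; auto; apply E_sym; auto.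
  -
    intros M K h1 D1 h2 D2 G' Hinc Hv T HgT HiT HTE.
    pose proof (NG _ h1) as Hg0. pose proof (NG _ h2) as Hg0'.
    dnf (Sign M K) Hq C Hg Hi. destruct C as [C1 C2].
    irrc Hi. gcomp Hg.
    dnf (Pub K) Hq' C' Hg' Hi'.
    irrc Hi'. gcomp Hg'.
    assert (Hac : ac_eq t2 t) by (apply irr_E_ac; auto; eapply E_trans; [apply E_sym; exact C2|exact C']).
    apply S_cut with (M := Sign t1 t2); [apply valid_mk; auto| |].
    + apply D1; auto.
    + apply S_cut with (M := Pub t); [apply valid_mk; vld| |].
      * apply D2; auto; [apply incl_tl; auto| vld].
      * apply S_signL with (M := t1) (K := t2) (L := t); [apply valid_mk; vld| right; left; auto | left; auto | auto |].
        apply S_id with (C := t1); [apply valid_mk; vld| apply ectx_hole; left; auto|].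
        eapply E_trans; eauto.
  -
    intros M K h1 D1 h2 D2 G' Hinc Hv T HgT HiT HTE.
    assert (Hn : ~ isFn (Sign M K)) by (simpl; auto).
    pose proof (rigid_inv HiT HTE Hn) as C.
    destruct T; simpl in C; try contradiction. destruct C as [C1 C2].
    irrc HiT. gcomp HgT.
    apply S_signR; [apply valid_mk; auto| apply D1 | apply D2]; auto; apply E_sym; auto.
  -
    intros M K h1 D1 h2 D2 G' Hinc Hv T HgT HiT HTE.
    pose proof (NG _ h1) as Hg0.
    dnf (Blind M K) Hq C Hg Hi. destruct C as [C1 C2].
    irrc Hi. gcomp Hg.
    apply S_cut with (M := Blind t1 t2); [apply valid_mk; auto| |].
    + apply D1; auto.
    + apply S_blindL1 with (M := t1) (K := t2); [apply valid_mk; vld| left; auto | |].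
      * apply D2; auto; [apply incl_tl; auto| vld| apply E_sym; auto].
      * apply S_id with (C := t1); [apply valid_mk; vld| apply ectx_hole; left; auto|].
        eapply E_trans; eauto.
  -
    intros M K h1 D1 h2 D2 G' Hinc Hv T HgT HiT HTE.
    assert (Hn : ~ isFn (Blind M K)) by (simpl; auto).
    pose proof (rigid_inv HiT HTE Hn) as C.
    destruct T; simpl in C; try contradiction. destruct C as [C1 C2].
    irrc HiT. gcomp HgT.
    apply S_blindR; [apply valid_mk; auto| apply D1 | apply D2]; auto; apply E_sym; auto.
  -
    intros M Rr K h1 D1 h2 D2 G' Hinc Hv T HgT HiT HTE.
    pose proof (NG _ h1) as Hg0.
    dnf (Sign (Blind M Rr) K) Hq C Hg Hi. destruct C as [C1 C2].
    irrc Hi. gcomp Hg.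
    assert (Hn : ~ isFn (Blind M Rr)) by (simpl; auto).
    pose proof (rigid_inv H (E_sym C1) Hn) as C3.
    destruct t1; simpl in C3; try contradiction. destruct C3 as [C4 C5].
    irrc H. gcomp H1.
    apply S_cut with (M := Sign (Blind t1_1 t1_2) t2); [apply valid_mk; auto| |].
    + apply D1; auto.
    + apply S_blindL2 with (M := t1_1) (Rr := t1_2) (K := t2); [apply valid_mk; vld| left; auto | |].
      * apply D2; auto; [apply incl_tl; auto| vld| apply E_sym; auto].
      * assert (gterm (Sign t1_1 t2)) by gsimp.
        assert (irreducible (Sign t1_1 t2)) by (apply irr_Sign; auto).
        apply S_id with (C := Sign t1_1 t2); [apply valid_mk; vld| apply ectx_hole; left; auto|].
        eapply E_trans; [exact HTE| apply E_Sign; auto].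
  -
    intros f args hl hf D G' Hinc Hv T HgT HiT HTE.
    apply (cut_list D); auto.
    { rewrite Forall_forall in *; auto. }
    intros G'' h1 h2 h3.
    apply S_id with (C := Fn f (map nf args)); [apply valid_mk; auto| |].
    + apply ectx_fn; [rewrite length_map; auto|].
      apply Forall_forall. intros x Hx. apply ectx_hole, h1; auto.
    + eapply E_trans; [exact HTE|]. apply E_Fn.
      clear -Hnf. induction args; constructor; auto. apply E_sym, nf_E.
  -
    intros M N h1 D1 HEq Hg G' Hinc Hv T HgT HiT HTE.
    apply D1; auto. eapply E_trans; eauto.
Qed.

End Proof.

Theorem proposition1 (F : Type) (arity : F -> nat) (oplus : option F)
  (R : list (term F * term F))
  (HE : presentation arity oplus R)
  (nf : term F -> term F)
  (Hnf : forall t, is_nf_of oplus R t (nf t))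
  (G : list (term F)) (M : term F) :
  (forall t, In t G -> gterm arity t) -> gterm arity M ->
  (ND arity oplus R G M <-> SC arity oplus R (map nf G) (nf M)).
Proof.
  intros HG HM. split.
  - intro H. apply (main HE Hnf HG H).
    + apply incl_refl.
    + intros x Hx. apply in_map_iff in Hx. destruct Hx as [g [<- Hg]].
      split; [apply (nf_gterm HE Hnf); auto| apply (nf_irr Hnf)].
    + apply (nf_gterm HE Hnf); auto.
    + apply (nf_irr Hnf).
    + apply (nf_E Hnf _).
  - intro H. apply SC_ND in H.
    apply (N_approx (N := nf M)); auto; [| apply (E_sym (nf_E Hnf _))].
    apply (ND_subst (G1 := map nf G)); auto.
    intros x Hx. apply in_map_iff in Hx. destruct Hx as [g [<- Hg]].
    apply (N_approx (N := g)); [apply N_id; auto| apply (nf_E Hnf _)| apply (nf_gterm HE Hnf); auto].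
Qed.
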